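(* For every positive integer $n$, there exists a top-balanced permutation sequence of length $n$; that is, there exist bijections $\pi_1,\ldots,\pi_n : N \to [n]$ such that for every day $t \in [n]$ and every player $i \in N$ we have $Z_i^t[1] \le \lceil n/t \rceil$.
   Context: Let $n$ be a positive integer, $N$ a set of $n$ players and $[n]=\{1,\ldots,n\}$ a set of $n$ items, where smaller numbers denote better items. A permutation sequence of length $n$ is an ordered tuple $(\pi_1,\ldots,\pi_n)$ of bijections $\pi_t : N\to[n]$; on day $t$ player $i$ receives item $\pi_t(i)$. For $t\in[n]$ and $i\in N$, $Z_i^t$ denotes the multiset $\{\pi_1(i),\ldots,\pi_t(i)\}$, and for $j\in[t]$, $Z_i^t[j]$ denotes the $j$-th smallest element of $Z_i^t$ (counted with multiplicity), so $Z_i^t[1]$ is the best item $i$ received in the first $t$ days. *)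

(* Defs.v *)
From mathcomp Require Import all_boot fingroup perm.
Set Implicit Arguments. Unset Strict Implicit. Unset Printing Implicit Defensive.

(* Players N := 'I_n, items [n] = {1..n}; item k is represented by the ordinal
   k-1 : 'I_n, so the item number of o : 'I_n is o.+1.
   A permutation sequence of length n: day d : 'I_n (day d.+1) gets a bijection
   pi d : {perm 'I_n} (players -> item indices). *)

Definition item_of (n : nat) (o : 'I_n) : nat := o.+1.

Definition Zseq (n : nat) (pi : 'I_n -> {perm 'I_n}) (t : nat) (i : 'I_n)
  : seq nat :=
  map (fun d : 'I_n => item_of (pi d i)) (filter (fun d : 'I_n => d < t) (enum 'I_n)).

Definition Zth (n : nat) (pi : 'I_n -> {perm 'I_n}) (t : nat) (i : 'I_n)
  (j : nat) : nat :=
  nth 0 (sort leq (Zseq pi t i)) j.-1.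

Definition ceil_div (a b : nat) : nat := (a + b - 1) %/ b.

Definition top_balanced (n : nat) (pi : 'I_n -> {perm 'I_n}) : Prop :=
  forall (t : nat) (i : 'I_n), 1 <= t <= n -> Zth pi t i 1 <= ceil_div n t.

(* Main.v *)
Require Import Defs.
From mathcomp Require Import all_boot fingroup perm.
From mathcomp Require Import zify.

Set Implicit Arguments. Unset Strict Implicit. Unset Printing Implicit Defensive.

Section Construction.
Variable n : nat.

Definition prec (g : 'I_n -> nat) (j i : 'I_n) : bool :=
  (g i < g j) || ((g j == g i) && (j < i)).

Definition rset (g : 'I_n -> nat) (i : 'I_n) : {set 'I_n} := [set j | prec g j i].

Lemma prec_irr g i : ~~ prec g i i.
Proof. rewrite /prec ltnn eqxx /= ltnn. by []. Qed.

Lemma prec_trans g k i j : prec g k i -> prec g i j -> prec g k j.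
Proof.
rewrite /prec => /orP [h1 | /andP [/eqP h1 h2]] /orP [h3 | /andP [/eqP h3 h4]];
apply/orP; lia.
Qed.

Lemma prec_total g i j : i != j -> prec g i j || prec g j i.
Proof.
move=> hij; rewrite /prec.
have : (nat_of_ord i != nat_of_ord j) by [].
move=> hne; case: (ltngtP (g i) (g j)) => h; apply/orP; lia.
Qed.

Lemma rset_card g i : #|rset g i| < n.
Proof.
rewrite -[X in _ < X]card_ord -cardsT; apply: proper_card.
apply/properP; split; first exact: subsetT.
exists i; first by rewrite inE.
by rewrite inE (negbTE (prec_irr g i)).
Qed.

Definition rank (g : 'I_n -> nat) (i : 'I_n) : 'I_n := Ordinal (rset_card g i).

Lemma rank_mono g i j : prec g i j -> rank g i < rank g j.
Proof.
move=> hij /=; apply: proper_card; apply/properP; split.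
  apply/subsetP => k; rewrite !inE => hk; exact: prec_trans hk hij.
exists i; first by rewrite inE.
by rewrite inE (negbTE (prec_irr g i)).
Qed.

Lemma rank_inj g : injective (rank g).
Proof.
move=> i j hij; apply/eqP; apply/negPn/negP => hne.
case/orP: (prec_total g hne) => /rank_mono; rewrite hij ltnn //.
Qed.

Definition rperm (g : 'I_n -> nat) : {perm 'I_n} := perm (@rank_inj g).

Lemma rpermE g i : rperm g i = rank g i.
Proof. by rewrite permE. Qed.

Lemma rperm_anti g i j : g j < g i -> rperm g i < rperm g j.
Proof. move=> h; rewrite !rpermE; apply: rank_mono; by rewrite /prec h. Qed.

Fixpoint mstate (t : nat) : 'I_n -> nat :=
  match t with
  | 0 => fun _ => n
  | t'.+1 => fun i => minn (mstate t' i) (rperm (mstate t') i)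
  end.

Definition P (t : nat) : {perm 'I_n} := rperm (mstate t).

Lemma mstate_attained t i : 0 < t -> exists2 d, d < t & mstate t i = P d i.
Proof.
elim: t => [//|t IH] _.
case: t IH => [|t] IH.
  exists 0 => //=; rewrite /P /=.
  have := ltn_ord (rperm (fun _ : 'I_n => n) i). lia.
have [d hd hm] := IH isT.
rewrite [mstate _ i]/= -/(mstate t.+1).
case: (leqP (mstate t.+1 i) (rperm (mstate t.+1) i)) => h.
  exists d; first lia. rewrite -hm. lia.
exists t.+1 => //; rewrite /P; lia.
Qed.

Lemma card_lt v (hv : v <= n) : #|[set o : 'I_n | o < v]| = v.
Proof.
have -> : [set o : 'I_n | o < v] = [set widen_ord hv o | o : 'I_v].
  apply/setP => o; rewrite inE; apply/idP/imsetP.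
    move=> ho; exists (Ordinal ho) => //; exact: val_inj.
  by case=> o' _ ->; rewrite /= ltn_ord.
rewrite card_imset ?card_ord //.
by move=> a b /(congr1 val) /= /val_inj.
Qed.

Lemma invariant t v : #|[set i | v <= mstate t i]| <= n - v * t.
Proof.
elim: t v => [|t IH] v.
  rewrite muln0 subn0; rewrite -[X in _ <= X]card_ord; exact: max_card.
set m := mstate t; set p := rperm m.
have -> : [set i | v <= mstate t.+1 i] = [set i | (v <= m i) && (v <= p i)].
  by apply/setP => i; rewrite !inE /= leq_min.
case: (leqP n v) => hnv.
  suff -> : [set i | (v <= m i) && (v <= p i)] = set0 by rewrite cards0.
  apply/setP => i; rewrite !inE.
  have := ltn_ord (p i); lia.
set A := [set i | v <= m i]; set B := [set i | p i < v].
have cB : #|B| = v.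
  have -> : B = p @^-1: [set o : 'I_n | o < v] by apply/setP => i; rewrite !inE.
  rewrite card_preimset; last exact: perm_inj.
  by apply: card_lt; lia.
case: (boolP (B \subset A)) => hBA.
  have -> : [set i | (v <= m i) && (v <= p i)] = A :\: B.
    by apply/setP => i; rewrite !inE -leqNgt andbC.
  rewrite cardsD (setIidPr hBA) cB.
  have := IH v; rewrite -/m -/A mulnS. lia.
have [j hjB hjA] : exists2 j, j \in B & j \notin A.
  case/subsetPn: hBA => j h1 h2; by exists j.
suff -> : [set i | (v <= m i) && (v <= p i)] = set0 by rewrite cards0.
apply/setP => i; rewrite !inE.
apply/negbTE/negP => /andP [h1 h2].
move: hjB hjA; rewrite !inE -ltnNge => hj1 hj2.
have := rperm_anti (g:=m) (i:=i) (j:=j). rewrite -/p. lia.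
Qed.

Lemma head_sorted_le (s : seq nat) x : sorted leq s -> x \in s -> nth 0 s 0 <= x.
Proof.
case: s => [//|a s] /= hs; rewrite inE => /orP [/eqP -> //|hx].
have := order_path_min leq_trans hs => /allP; apply; exact hx.
Qed.

End Construction.

Theorem mainTheorem1 (n : nat) (hn : 0 < n) :
  exists pi : 'I_n -> {perm 'I_n}, top_balanced pi.
Proof.
exists (fun d : 'I_n => P n d).
move=> t i /andP [ht1 htn].
have [d hdt hm] := @mstate_attained n t i ht1.
have hdn : d < n by lia.
have hin : (item_of (P n (Ordinal hdn) i)) \in Zseq (fun d : 'I_n => P n d) t i.
  apply/mapP; exists (Ordinal hdn) => //.
  by rewrite mem_filter /= hdt mem_enum.
rewrite /Zth /=.
apply: leq_trans (head_sorted_le (sort_sorted leq_total _) _) _.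
  by rewrite mem_sort; exact hin.
rewrite /item_of /= -hm.
have hinv := @invariant n t (mstate t i).
have hmem : 0 < n - mstate t i * t.
  apply: leq_trans hinv.
  by rewrite card_gt0; apply/set0Pn; exists i; rewrite inE.
have hlt : mstate t i * t < n by lia.
rewrite /ceil_div.
rewrite -[X in X <= _](mulnK _ ht1).
apply: leq_div2r. lia.
Qed.
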